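(* Let $R$ be a uniform $L$-layered $1$-semifield$^\dagger$, let $a\in R$, and let $f=\sum_{i=0}^m \alpha_i^{[\ell_i]}\lambda^i\in R[\lambda]$ be $a$-primary. Then for $b\in R_k$ (i.e. $b$ of layer $k$), $$f(b)=\begin{cases} (b^m)^{[k^m]} & \text{if } b>_\nu a,\\ (a^m)^{[\sum_i \ell_i k^i]} & \text{if } b\cong_\nu a,\\ \alpha_0^{[\ell_0]} & \text{if } b<_\nu a.\end{cases}$$
   Context: Concretely, $R=R(L,\mathcal{G})$ where $L$ is a totally ordered semiring$^\dagger$ (semiring without necessarily a zero) and $\mathcal{G}$ a totally ordered abelian group: elements are written $x^{[\ell]}$ with $x\in\mathcal{G}$ the value and $\ell\in L$ the layer, with $x^{[k]}y^{[\ell]}=(xy)^{[k\ell]}$ and $x^{[k]}+y^{[\ell]}$ equal to $x^{[k]}$ if $x>y$, $y^{[\ell]}$ if $x<y$, $x^{[k+\ell]}$ if $x=y$; $R_k$ denotes the elements of layer $k$. In the claim, $(c)^{[\ell]}$ denotes the element whose $\mathcal{G}$-value is that of $c$ and whose layer is $\ell$. $x\cong_\nu y$ means equal $\mathcal{G}$-values, and $x<_\nu y$ means the $\mathcal{G}$-value of $x$ is smaller. A polynomial of degree $t$ is monic if its leading coefficient is $\nu$-equivalent to $\mathbb{1}_R$; a monic polynomial $f$ of degree $t$ is $a$-primary if $f=\lambda^t+\sum_j\alpha_j\lambda^{i_j}$ with $\alpha_j\cong_\nu a^{t-i_j}$ for all $j$. Polynomials are evaluated as functions $R\to R$. *)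

(* Defs.v *)
From HB Require Import structures.
From mathcomp Require Import all_boot all_order all_algebra.
Set Implicit Arguments. Unset Strict Implicit. Unset Printing Implicit Defensive.
Import GRing.Theory.
Local Open Scope ring_scope.

Definition tord_semiring (L : Type) (addL mulL : L -> L -> L) (oneL : L)
  (leL : L -> L -> bool) : Prop :=
  (forall x y z, addL x (addL y z) = addL (addL x y) z) /\
  (forall x y, addL x y = addL y x) /\
  (forall x y z, mulL x (mulL y z) = mulL (mulL x y) z) /\
  (forall x, mulL oneL x = x /\ mulL x oneL = x) /\
  (forall x y z, mulL x (addL y z) = addL (mulL x y) (mulL x z)
                 /\ mulL (addL y z) x = addL (mulL y x) (mulL z x)) /\
  (forall x, leL x x) /\ (forall x y, leL x y -> leL y x -> x = y) /\
  (forall x y z, leL x y -> leL y z -> leL x z) /\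
  (forall x y, leL x y || leL y x) /\
  (forall x y z, leL x y ->
     [/\ leL (addL x z) (addL y z), leL (addL z x) (addL z y),
         leL (mulL x z) (mulL y z) & leL (mulL z x) (mulL z y)]).

Definition tord_group (G : zmodType) (leG : rel G) : Prop :=
  [/\ (forall x, leG x x), (forall x y, leG x y -> leG y x -> x = y),
      (forall x y z, leG x y -> leG y z -> leG x z),
      (forall x y, leG x y || leG y x) &
      (forall x y z, leG x y -> leG (x + z) (y + z))].

Definition ltG (G : zmodType) (leG : rel G) (x y : G) : bool :=
  leG x y && (x != y).

(* The uniform layered 1-semifield R(L,G): an element x^[l] is the pair (x, l),
   with value x (in G) and layer l (in L). *)
Section Layered.
Variables (L : Type) (addL mulL : L -> L -> L) (oneL : L) (G : zmodType) (leG : rel G).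

Definition radd (x y : G * L) : G * L :=
  if ltG leG y.1 x.1 then x
  else if ltG leG x.1 y.1 then y
  else (x.1, addL x.2 y.2).

Definition rmul (x y : G * L) : G * L := (x.1 + y.1, mulL x.2 y.2).

Definition rone : G * L := (0, oneL).

Definition rpow (x : G * L) (n : nat) : G * L := iter n (rmul x) rone.

Definition powL (k : L) (n : nat) : L := iter n (mulL k) oneL.

(* sum F 0 + F 1 + ... + F n in R (R has no zero) *)
Fixpoint rsum (n : nat) (F : nat -> G * L) : G * L :=
  match n with 0 => F 0%N | n'.+1 => radd (rsum n' F) (F n) end.

Fixpoint Lsum (n : nat) (F : nat -> L) : L :=
  match n with 0 => F 0%N | n'.+1 => addL (Lsum n' F) (F n) end.

Definition peval (m : nat) (alpha : nat -> G * L) (b : G * L) : G * L :=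
  rsum m (fun i => rmul (alpha i) (rpow b i)).

(* f = \sum_{i=0}^m alpha_i lambda^i is a-primary: f = lambda^m + ..., i.e.
   leading coefficient 1_R, and alpha_i ~nu a^(m-i) for all i. *)
Definition a_primary (m : nat) (alpha : nat -> G * L) (a : G * L) : Prop :=
  alpha m = rone /\ forall i, (i <= m)%N -> (alpha i).1 = a.1 *+ (m - i).
End Layered.

(* Main.v *)
Require Import Defs.
From HB Require Import structures.
From mathcomp Require Import all_boot all_order all_algebra.
Local Open Scope ring_scope.
Import GRing.Theory.

Section Aux.
Variables (L : Type) (addL mulL : L -> L -> L) (oneL : L) (G : zmodType) (leG : rel G).
Hypothesis HG : tord_group leG.

Lemma ltG_asym {x y} : ltG leG x y -> ~~ ltG leG y x.
Proof.
case: HG => _ anti _ _ _; rewrite /ltG => /andP[h1 h2].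
apply/negP => /andP[h3 _]; by rewrite (anti _ _ h1 h3) eqxx in h2.
Qed.

Lemma ltG_irr x : ~~ ltG leG x x.
Proof. by rewrite /ltG eqxx andbF. Qed.

Lemma ltG_trans {x y z} : ltG leG x y -> ltG leG y z -> ltG leG x z.
Proof.
case: HG => _ anti tr _ _; rewrite /ltG => /andP[h1 h2] /andP[h3 h4].
rewrite (tr _ _ _ h1 h3) /=; apply/negP => /eqP exz; subst z.
by rewrite (anti _ _ h1 h3) eqxx in h2.
Qed.

Lemma ltG_add {x y} z : ltG leG x y -> ltG leG (z + x) (z + y).
Proof.
case: HG => _ _ _ _ cmp; rewrite /ltG => /andP[h1 h2].
rewrite addrC (addrC z y) cmp //=; apply/negP => /eqP /addIr e.
by rewrite e eqxx in h2.
Qed.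

Lemma rsum_inc n (F : nat -> G * L) :
  (forall i, (i < n)%N -> ltG leG (F i).1 (F i.+1).1) ->
  rsum addL leG n F = F n.
Proof.
elim: n => [//|n IH] H /=.
rewrite IH; last by move=> i hi; apply: H; apply: ltnW.
by rewrite /radd (negbTE (ltG_asym (H n (ltnSn n)))) H.
Qed.

Lemma rsum_dec n (F : nat -> G * L) :
  (forall i, (i < n)%N -> ltG leG (F i.+1).1 (F i).1) ->
  rsum addL leG n F = F 0%N /\ (forall j, (j <= n)%N -> ~~ ltG leG (F 0%N).1 (F j).1).
Proof.
elim: n => [|n IH] H /=.
  by split => // j; rewrite leqn0 => /eqP ->; apply: ltG_irr.
have [e1 e2] : rsum addL leG n F = F 0%N /\
   (forall j, (j <= n)%N -> ~~ ltG leG (F 0%N).1 (F j).1).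
  by apply: IH => i hi; apply: H; apply: ltnW.
have lt0 : ltG leG (F n.+1).1 (F 0%N).1.
  have {}H2 : forall j, (j <= n)%N -> ltG leG (F n.+1).1 (F (n - j)%N).1.
    elim=> [|j IHj] hj; first by rewrite subn0; apply: H.
    apply: ltG_trans (IHj (ltnW hj)) _.
    have -> : (n - j = (n - j.+1).+1)%N by rewrite subnSK.
    by apply: H; rewrite ltnS leq_subr.
  by have := H2 n (leqnn n); rewrite subnn.
split.
  by rewrite e1 /radd lt0.
move=> j; rewrite leq_eqVlt ltnS => /orP[/eqP ->|]; last exact: e2.
exact: ltG_asym.
Qed.

Lemma rsum_eq n (F : nat -> G * L) c :
  (forall i, (i <= n)%N -> (F i).1 = c) ->
  rsum addL leG n F = (c, Lsum addL n (fun i => (F i).2)).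
Proof.
elim: n => [|n IH] H /=.
  by rewrite -(H 0%N (leqnn 0)); case: (F 0%N).
rewrite IH; last by move=> i hi; apply: H; apply: leqW.
by rewrite /radd /= H // (negbTE (ltG_irr c)).
Qed.

Lemma rpowE (b : G * L) i : rpow mulL oneL b i = (b.1 *+ i, powL mulL oneL b.2 i).
Proof. by elim: i => [//|i IH]; rewrite /rpow /= -/(rpow mulL oneL b i) IH /rmul /= mulrS. Qed.

End Aux.

Theorem proposition7p16 (L : Type) (addL mulL : L -> L -> L) (oneL : L)
  (leL : L -> L -> bool) (HL : tord_semiring addL mulL oneL leL)
  (G : zmodType) (leG : rel G) (HG : tord_group leG)
  (a : G * L) (m : nat) (alpha : nat -> G * L)
  (Hf : a_primary oneL m alpha a)
  (k : L) (b : G * L) (Hb : b.2 = k) :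
  [/\ ltG leG a.1 b.1 ->
        peval addL mulL oneL leG m alpha b = (b.1 *+ m, powL mulL oneL k m),
      b.1 = a.1 ->
        peval addL mulL oneL leG m alpha b
        = (a.1 *+ m, Lsum addL m (fun i => mulL (alpha i).2 (powL mulL oneL k i))) &
      ltG leG b.1 a.1 ->
        peval addL mulL oneL leG m alpha b = alpha 0%N].
Proof.
case: Hf => Hm Ha.
case: HL => _ [_ [_ [Hone _]]].
set F := fun i => rmul mulL (alpha i) (rpow mulL oneL b i).
have F1 : forall i, (i <= m)%N -> (F i).1 = a.1 *+ (m - i) + b.1 *+ i.
  by move=> i hi; rewrite /F rpowE /rmul /= Ha.
have Fstep : forall i, (i < m)%N ->
   (F i).1 = (a.1 *+ (m - i.+1) + b.1 *+ i) + a.1 /\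
   (F i.+1).1 = (a.1 *+ (m - i.+1) + b.1 *+ i) + b.1.
  move=> i hi; rewrite F1 ?F1 //; last exact: ltnW.
  have -> : (m - i = (m - i.+1).+1)%N by rewrite subnSK.
  rewrite mulrS mulrSr; split.
    by rewrite -!addrA [a.1 + _]addrC addrA.
  by rewrite addrA.
rewrite /peval -/F; split.
- move=> hab; rewrite rsum_inc //; last first.
    move=> i hi; have [-> ->] := Fstep i hi; exact: ltG_add.
  rewrite /F rpowE Hm /rmul /= add0r Hb; by case: (Hone (powL mulL oneL k m)) => ->.
- move=> hab; rewrite (@rsum_eq _ _ _ _ _ _ (a.1 *+ m)).
    congr pair; elim: m {Hm Ha F1 Fstep hab} => [|n IHn] /=.
      by rewrite /F ?rpowE /rmul /= ?Hb.
    by rewrite IHn /F ?rpowE /rmul /= ?Hb.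
  move=> i hi; rewrite F1 // hab -mulrnDr subnK //.
- move=> hab.
  have Hd : forall i, (i < m)%N -> ltG leG (F i.+1).1 (F i).1.
    move=> i hi; have [-> ->] := Fstep i hi; exact: ltG_add.
have HH := @rsum_dec L addL G leG HG m F Hd.
case: HH => E _. rewrite E.
rewrite /F rpowE mulr0n /rmul addr0.
case: (alpha 0%N) => x l. by rewrite (proj2 (Hone l)).
Qed.
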